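(* Let $G$ be a group, $A$ a set of generators of $G$, and $E_G$ the category of $G$-sets. There exists a closed model structure on $E_G$, in which every morphism is a fibration, such that a morphism of $G$-sets $f:X\to Y$ is a weak equivalence if and only if the induced morphism of directed Cayley graphs $C(X,A,G)\to C(Y,A,G)$ is a weak equivalence of the closed model on $\mathrm{Gph}$ defined by counting $(c_p)_{p\ge1}$, i.e. if and only if for every $p\ge1$ composition with it is a bijection $\mathrm{Hom}_{\mathrm{Gph}}(c_p,C(X,A,G))\to\mathrm{Hom}_{\mathrm{Gph}}(c_p,C(Y,A,G))$.
   Context: A directed graph consists of nodes, arcs, and source/target maps; $\mathrm{Gph}$ is the category of directed graphs. For $p\ge1$, $c_p$ is the directed graph with nodes $\mathbb{Z}/p\mathbb{Z}$ and one arc from $[n]$ to $[n+1]$ for each $[n]$. For a $G$-set $X$, the directed Cayley graph $C(X,A,G)$ has node set $X$, arc set $X\times A$, source $(x,a)\mapsto x$ and target $(x,a)\mapsto a\cdot x$; a $G$-map $\phi$ induces $(\phi,\phi\times\mathrm{id}_A)$. A closed model structure is a triple $(\mathrm{Fib},\mathrm{Cof},W)$, $W$ satisfying 2-out-of-3, with $(\mathrm{Fib}\cap W,\mathrm{Cof})$ and $(\mathrm{Fib},\mathrm{Cof}\cap W)$ weak factorization systems. *)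

(* Defs.v *)
From mathcomp Require Import all_boot.
Set Implicit Arguments. Unset Strict Implicit. Unset Printing Implicit Defensive.

Record group := Group {
  gcar :> Type;
  gmul : gcar -> gcar -> gcar;
  gone : gcar;
  ginv : gcar -> gcar;
  gmulA : forall x y z, gmul x (gmul y z) = gmul (gmul x y) z;
  gmul1 : forall x, gmul gone x = x;
  gmulV : forall x, gmul (ginv x) x = gone
}.

Definition is_subgroup (G : group) (H : G -> Prop) : Prop :=
  H (gone G) /\ (forall x y, H x -> H y -> H (gmul x y)) /\ (forall x, H x -> H (ginv x)).

Definition generates (G : group) (A : G -> Prop) : Prop :=
  forall H : G -> Prop, is_subgroup H -> (forall a, A a -> H a) -> forall g, H g.

Record gset (G : group) := GSet {
  gs_car :> Type;
  act : G -> gs_car -> gs_car;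
  act1 : forall x, act (gone G) x = x;
  actM : forall g h x, act (gmul g h) x = act g (act h x)
}.

Record gmap (G : group) (X Y : gset G) := GMap {
  gfun :> X -> Y;
  gequiv : forall g x, gfun (act g x) = act g (gfun x)
}.

Definition gcomp (G : group) (X Y Z : gset G) (g : gmap Y Z) (f : gmap X Y) : gmap X Z.
Proof.
  refine (@GMap G X Z (fun x => g (f x)) _).
  by move=> h x; rewrite !gequiv.
Defined.

Definition mclass (G : group) := forall X Y : gset G, gmap X Y -> Prop.

Definition cap_class (G : group) (P Q : mclass G) : mclass G :=
  fun X Y f => P X Y f /\ Q X Y f.

Definition llp (G : group) (A B X Y : gset G) (i : gmap A B) (p : gmap X Y) : Prop :=
  forall (u : gmap A X) (v : gmap B Y),
    (forall a, p (u a) = v (i a)) ->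
    exists h : gmap B X, (forall a, h (i a) = u a) /\ (forall b, p (h b) = v b).

Definition wfs (G : group) (L R : mclass G) : Prop :=
  (forall (X Y : gset G) (f : gmap X Y),
     exists (Z : gset G) (i : gmap X Z) (p : gmap Z Y),
       L X Z i /\ R Z Y p /\ (forall x, p (i x) = f x)) /\
  (forall (A B : gset G) (i : gmap A B),
     L A B i <-> (forall (X Y : gset G) (p : gmap X Y), R X Y p -> llp i p)) /\
  (forall (X Y : gset G) (p : gmap X Y),
     R X Y p <-> (forall (A B : gset G) (i : gmap A B), L A B i -> llp i p)).

Definition two_out_of_three (G : group) (W : mclass G) : Prop :=
  forall (X Y Z : gset G) (f : gmap X Y) (g : gmap Y Z),
    (W X Y f -> W Y Z g -> W X Z (gcomp g f)) /\
    (W X Y f -> W X Z (gcomp g f) -> W Y Z g) /\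
    (W Y Z g -> W X Z (gcomp g f) -> W X Y f).

Definition closed_model_structure (G : group) (Fib Cof W : mclass G) : Prop :=
  two_out_of_three W /\ wfs Cof (cap_class Fib W) /\ wfs (cap_class Cof W) Fib.

Record graph := Graph {
  gnode : Type;
  garc : Type;
  gsrc : garc -> gnode;
  gtgt : garc -> gnode
}.

Record ghom (Γ Δ : graph) := GHom {
  hnode : gnode Γ -> gnode Δ;
  harc : garc Γ -> garc Δ;
  hsrc : forall e, @gsrc Δ (harc e) = hnode (@gsrc Γ e);
  htgt : forall e, @gtgt Δ (harc e) = hnode (@gtgt Γ e)
}.

Definition ghcomp (Γ Δ Θ : graph) (g : ghom Δ Θ) (f : ghom Γ Δ) : ghom Γ Θ.
Proof.
  refine (@GHom Γ Θ (fun x => hnode g (hnode f x)) (fun e => harc g (harc f e)) _ _).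
  - by move=> e; rewrite hsrc hsrc.
  - by move=> e; rewrite htgt htgt.
Defined.

(* c_p : nodes Z/pZ (as 'I_p), one arc [n] -> [n+1] for each [n] (p >= 1) *)
Definition cycle_graph (p : nat) : graph :=
  @Graph 'I_p 'I_p (fun n => n) (fun n => ordS n).

Definition cayley (G : group) (A : G -> Prop) (X : gset G) : graph :=
  @Graph X (X * {a : G | A a})%type (fun xa => xa.1) (fun xa => act (sval xa.2) xa.1).

Definition cayley_map (G : group) (A : G -> Prop) (X Y : gset G) (f : gmap X Y) :
  ghom (cayley A X) (cayley A Y).
Proof.
  refine (@GHom (cayley A X) (cayley A Y) (fun x => f x)
            (fun xa => (f xa.1, xa.2)) _ _).
  - by [].
  - by move=> [x a] /=; rewrite gequiv.
Defined.

Definition gph_counting_we (Γ Δ : graph) (φ : ghom Γ Δ) : Prop :=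
  forall p : nat, 0 < p ->
    bijective (fun h : ghom (cycle_graph p) Γ => ghcomp φ h).

(* Main.v *)
Require Import Defs.
From mathcomp Require Import all_boot.
From Stdlib Require Import ProofIrrelevance FunctionalExtensionality PropExtensionality ClassicalEpsilon.
Set Implicit Arguments. Unset Strict Implicit. Unset Printing Implicit Defensive.

Definition sA (G : group) (A : G -> Prop) := {a : G | A a}.

Fixpoint pv (G : group) (A : G -> Prop) n (lab : 'I_n.+1 -> sA A) (k : nat) : G :=
  match k with 0 => gone G | k'.+1 => gmul (sval (lab (inord k'))) (pv lab k') end.

Definition mkw (G : group) (A : G -> Prop) (X : gset G) n (lab : 'I_n.+1 -> sA A)
  (x : X) (hx : act (pv lab n.+1) x = x) : ghom (cycle_graph n.+1) (cayley A X).
Proof.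
refine (@GHom (cycle_graph n.+1) (cayley A X) (fun k => act (pv lab k) x)
   (fun k => (act (pv lab k) x, lab k)) _ _).
- by [].
- move=> k /=.
  have [kn|kn] := ltnP k n.
  + have -> : (k.+1 %% n.+1) = k.+1 by rewrite modn_small.
    by rewrite /= inord_val actM.
  + have ek : nat_of_ord k = n by apply/eqP; rewrite eqn_leq kn -ltnS ltn_ord.
    have -> : (k.+1 %% n.+1) = 0 by rewrite ek modnn.
    rewrite /= act1 -[RHS]hx /= actM.
    have -> : (inord n : 'I_n.+1) = k by apply: val_inj; rewrite /= inordK // ek.
    by rewrite ek.
Defined.

Lemma ghom_ext (Γ Δ : graph) (h1 h2 : ghom Γ Δ) :
  (forall x, hnode h1 x = hnode h2 x) -> (forall e, harc h1 e = harc h2 e) -> h1 = h2.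
Proof.
case: h1 => n1 a1 s1 t1; case: h2 => n2 a2 s2 t2 /= Hn Ha.
have En := functional_extensionality _ _ Hn.
have Ea := functional_extensionality _ _ Ha.
subst; f_equal; apply: proof_irrelevance.
Qed.

Lemma hnode_walk (G : group) (A : G -> Prop) (X : gset G) n
  (h : ghom (cycle_graph n.+1) (cayley A X)) (k : 'I_n.+1) :
  hnode h k = act (pv (fun i => (harc h i).2) k) (hnode h ord0).
Proof.
suff H : forall m, m <= n -> hnode h (inord m) = act (pv (fun i => (harc h i).2) m) (hnode h ord0).
  by rewrite -H ?inord_val // -ltnS.
elim=> [|m IH] hm.
  rewrite /= act1; congr (hnode h _); apply: val_inj; rewrite /= inordK //.
have e : inord m.+1 = ordS (inord m : 'I_n.+1).
  apply: val_inj; rewrite /= !inordK ?modn_small //; by apply: (leq_trans hm).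
rewrite e -(htgt h) /=.
have /= -> := hsrc h (inord m).
by rewrite IH ?actM //; exact: ltnW.
Qed.

Lemma hnode_closed (G : group) (A : G -> Prop) (X : gset G) n
  (h : ghom (cycle_graph n.+1) (cayley A X)) :
  act (pv (fun i => (harc h i).2) n.+1) (hnode h ord0) = hnode h ord0.
Proof.
have e : (ord0 : 'I_n.+1) = ordS (inord n : 'I_n.+1).
  by apply: val_inj; rewrite /= inordK // modnn.
rewrite [in RHS]e -(htgt h) /=.
have /= -> := hsrc h (inord n).
by rewrite (hnode_walk h (inord n)) inordK // actM.
Qed.

Lemma mkw_eta (G : group) (A : G -> Prop) (X : gset G) n
  (h : ghom (cycle_graph n.+1) (cayley A X)) :
  h = mkw (hnode_closed h).
Proof.
apply: ghom_ext => [k|k] /=; first exact: hnode_walk.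
rewrite -(hnode_walk h k). have /= <- := hsrc h k. by case: (harc h k).
Qed.

Lemma mkw_eq (G : group) (A : G -> Prop) (X : gset G) n (lab : 'I_n.+1 -> sA A)
  (x x' : X) hx hx' : x = x' -> @mkw G A X n lab x hx = @mkw G A X n lab x' hx'.
Proof. by move=> e; subst; rewrite (proof_irrelevance _ hx hx'). Qed.

Lemma ghcomp_mkw (G : group) (A : G -> Prop) (X Y : gset G) (f : gmap X Y) n
  (lab : 'I_n.+1 -> sA A) (x : X) hx hy :
  ghcomp (cayley_map A f) (@mkw G A X n lab x hx) = @mkw G A Y n lab (f x) hy.
Proof. by apply: ghom_ext => k /=; rewrite gequiv. Qed.

Definition Wd (G : group) (A : G -> Prop) := {n : nat & 'I_n.+1 -> sA A}.
Definition wval (G : group) (A : G -> Prop) (w : Wd A) : G := pv (projT2 w) (projT1 w).+1.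

Definition Wc (G : group) (D : Type) (val : D -> G) (X Y : gset G) (f : gmap X Y) : Prop :=
 (forall w (y : Y), act (val w) y = y -> exists x, f x = y /\ act (val w) x = x) /\
 (forall w (x1 x2 : X), f x1 = f x2 -> act (val w) x1 = x1 -> act (val w) x2 = x2 -> x1 = x2).

Lemma W_Wc (G : group) (A : G -> Prop) (X Y : gset G) (f : gmap X Y) :
  gph_counting_we (cayley_map A f) <-> Wc (@wval G A) f.
Proof.
split.
- move=> H; split.
  + case=> n lab y /= hy.
    have [g gK Kg] := H n.+1 isT.
    set h := g (mkw hy).
    have Fh : ghcomp (cayley_map A f) h = mkw hy by rewrite /h Kg.
    exists (hnode h ord0); split.
      have -> : f (hnode h ord0) = hnode (ghcomp (cayley_map A f) h) ord0 by [].
      by rewrite Fh /= act1.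
    have El : (fun i => (harc h i).2) = lab.
      apply: functional_extensionality => i.
      have -> : (harc h i).2 = (harc (ghcomp (cayley_map A f) h) i).2 by [].
      by rewrite Fh.
    have := hnode_closed h; by rewrite El.
  + case=> n lab x1 x2 /= e h1 h2.
    have [g gK Kg] := H n.+1 isT.
    have h1' : act (pv lab n.+1) (f x1) = f x1 by rewrite -gequiv h1.
    have h2' : act (pv lab n.+1) (f x2) = f x2 by rewrite -gequiv h2.
    have E : mkw h1 = mkw h2.
      apply: (bij_inj (H n.+1 isT)) => /=.
      rewrite (ghcomp_mkw h1 h1') (ghcomp_mkw h2 h2'); exact: mkw_eq.
    have := f_equal (fun h : ghom (cycle_graph n.+1) (cayley A X) => hnode h (ord0 : 'I_n.+1)) E; by rewrite /= !act1.
- move=> [Hex Hun] [//|n] _.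
  have ex : forall hY : ghom (cycle_graph n.+1) (cayley A Y),
     {x : X | f x = hnode hY ord0 /\ act (pv (fun i => (harc hY i).2) n.+1) x = x}.
    move=> hY; apply: constructive_indefinite_description.
    exact: (Hex (existT _ n (fun i => (harc hY i).2)) _ (hnode_closed hY)).
  exists (fun hY => mkw (proj2 (proj2_sig (ex hY)))).
  + move=> h.
    have e : sval (ex (ghcomp (cayley_map A f) h)) = hnode h ord0.
      case: (ex _) => x [e1 e2] /=.
      by apply: (Hun (existT _ n (fun i => (harc h i).2))) => //=; apply: hnode_closed.
    rewrite [RHS]mkw_eta; exact: mkw_eq.
  + move=> hY.
    case: (ex hY) => x [e1 e2] /=.
    have hy : act (pv (fun i => (harc hY i).2) n.+1) (f x) = f x by rewrite -gequiv e2.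
    rewrite (ghcomp_mkw _ hy) [RHS]mkw_eta; exact: mkw_eq.
Qed.
Lemma gmulVr (G : group) (x : G) : gmul x (ginv x) = gone G.
Proof.
rewrite -[LHS]gmul1 -[in LHS](gmulV (ginv x)) -gmulA (gmulA (ginv x)) gmulV gmul1 gmulV //.
Qed.

Lemma gmul1r (G : group) (x : G) : gmul x (gone G) = x.
Proof. by rewrite -(gmulV x) gmulA gmulVr gmul1. Qed.

Definition sum_gset (G : group) (X Y : gset G) : gset G.
Proof.
refine (@GSet G (X + Y)%type
  (fun g s => match s with inl x => inl (act g x) | inr y => inr (act g y) end) _ _).
- by case=> x; rewrite act1.
- by move=> g h [x|x]; rewrite actM.
Defined.

Definition free_gset (G : group) (Q : Type) : gset G.
Proof.
refine (@GSet G (G * Q)%type (fun g sq => (gmul g sq.1, sq.2)) _ _).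
- by case=> s q /=; rewrite gmul1.
- by move=> g h [s q] /=; rewrite gmulA.
Defined.

Record eqc (G : group) (P : gset G) (R : P -> P -> Prop) : Prop := EqC {
  eqc_refl : forall a, R a a;
  eqc_sym : forall a b, R a b -> R b a;
  eqc_trans : forall a b c, R a b -> R b c -> R a c;
  eqc_act : forall t a b, R a b -> R (act t a) (act t b) }.

Definition qcar (G : group) (P : gset G) (R : P -> P -> Prop) :=
  {C : P -> Prop | exists a, C = R a}.

Definition qpi (G : group) (P : gset G) (R : P -> P -> Prop) (a : P) : qcar R :=
  exist _ (R a) (ex_intro _ a erefl).

Definition qrep (G : group) (P : gset G) (R : P -> P -> Prop) (c : qcar R) : P :=
  proj1_sig (constructive_indefinite_description _ (proj2_sig c)).

Lemma qrepK (G : group) (P : gset G) (R : P -> P -> Prop) (c : qcar R) :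
  qpi R (qrep c) = c.
Proof.
case: c => C HC; rewrite /qrep /=.
case: (constructive_indefinite_description _ _) => a /= Ha; subst.
rewrite /qpi; f_equal; apply: proof_irrelevance.
Qed.

Lemma qpi_eq (G : group) (P : gset G) (R : P -> P -> Prop) (hR : eqc R) (a b : P) :
  qpi R a = qpi R b <-> R a b.
Proof.
split.
- move=> e; have e1 := f_equal (@proj1_sig _ _) e; simpl in e1.
  by rewrite e1; apply: eqc_refl.
- move=> hab.
  have e1 : R a = R b.
    apply: functional_extensionality => x; apply: propositional_extensionality; split.
    + move=> h; exact: (eqc_trans hR (eqc_sym hR hab) h).
    + move=> h; exact: (eqc_trans hR hab h).
  rewrite /qpi; move: (ex_intro _ a _) (ex_intro _ b _); rewrite e1 => p1 p2.
  f_equal; apply: proof_irrelevance.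
Qed.

Lemma qpi_surj (G : group) (P : gset G) (R : P -> P -> Prop) (c : qcar R) :
  exists a, qpi R a = c.
Proof. by exists (qrep c); apply: qrepK. Qed.

Definition qgset (G : group) (P : gset G) (R : P -> P -> Prop) (hR : eqc R) : gset G.
Proof.
refine (@GSet G (qcar R) (fun t c => qpi R (act t (qrep c))) _ _).
- by move=> c; rewrite act1 qrepK.
- move=> g h c; apply/(qpi_eq hR); rewrite actM; apply: (eqc_act hR).
  apply/(qpi_eq hR); by rewrite qrepK.
Defined.

Lemma qactE (G : group) (P : gset G) (R : P -> P -> Prop) (hR : eqc R) t (a : P) :
  act t (qpi R a : qgset hR) = qpi R (act t a).
Proof. apply/(qpi_eq hR); apply: (eqc_act hR); apply/(qpi_eq hR); by rewrite qrepK. Qed.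

Definition qlift (G : group) (P : gset G) (R : P -> P -> Prop) (E : Type) (h0 : P -> E)
  (c : qcar R) : E := h0 (qrep c).

Lemma qliftE (G : group) (P : gset G) (R : P -> P -> Prop) (hR : eqc R) (E : Type) (h0 : P -> E)
  (hc : forall a b, R a b -> h0 a = h0 b) (a : P) : qlift h0 (qpi R a) = h0 a.
Proof. apply: hc; apply/(qpi_eq hR); by rewrite qrepK. Qed.
Definition Qt (G : group) (D : Type) (val : D -> G) (Y : gset G) :=
  {w : D & {y : Y | act (val w) y = y}}.

Definition PP (G : group) (D : Type) (val : D -> G) (X Y : gset G) : gset G :=
  sum_gset X (free_gset G (Qt val Y)).

Definition fP (G : group) (D : Type) (val : D -> G) (X Y : gset G) (f : gmap X Y)
  (a : PP val X Y) : Y :=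
  match a with inl x => f x | inr sq => act sq.1 (sval (projT2 sq.2)) end.
Arguments fP {G D} val {X Y} f a.

Definition cell (G : group) (D : Type) (val : D -> G) (X Y : gset G) (q : Qt val Y) :
  PP val X Y := inr (gone G, q).
Arguments cell {G D} val X {Y} q.

Definition good (G : group) (D : Type) (val : D -> G) (X Y : gset G) (f : gmap X Y)
  (S : PP val X Y -> PP val X Y -> Prop) : Prop :=
  eqc S /\ (forall q, S (act (val (projT1 q)) (cell val X q)) (cell val X q)) /\
  (forall w a1 a2, fP val f a1 = fP val f a2 -> S (act (val w) a1) a1 -> S (act (val w) a2) a2 -> S a1 a2).
Arguments good {G D} val {X Y} f S.

Definition Rm (G : group) (D : Type) (val : D -> G) (X Y : gset G) (f : gmap X Y)
  (a b : PP val X Y) : Prop := forall S, good val f S -> S a b.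
Arguments Rm {G D} val {X Y} f a b.

Lemma good_Rm (G : group) (D : Type) (val : D -> G) (X Y : gset G) (f : gmap X Y) :
  good val f (Rm val f).
Proof.
split; [split|split].
- by move=> a S [[]].
- by move=> a b h S hS; case: (hS) => [[_ hs _ _] _]; apply: hs; apply: h.
- by move=> a b c h1 h2 S hS; case: (hS) => [[_ _ ht _] _]; apply: ht (h1 S hS) (h2 S hS).
- by move=> t a b h S hS; case: (hS) => [[_ _ _ ha] _]; apply: ha; apply: h.
- by move=> q S [_ [hc _]]; apply: hc.
- move=> w a1 a2 e h1 h2 S hS; case: (hS) => [_ [_ hcl]].
  exact: hcl e (h1 S hS) (h2 S hS).
Qed.
Arguments good_Rm {G D} val {X Y} f.

Definition Rm_eqc (G : group) (D : Type) (val : D -> G) (X Y : gset G) (f : gmap X Y) :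
  eqc (Rm val f) := proj1 (good_Rm val f).
Arguments Rm_eqc {G D} val {X Y} f.

Definition Zq (G : group) (D : Type) (val : D -> G) (X Y : gset G) (f : gmap X Y) : gset G :=
  qgset (Rm_eqc val f).
Arguments Zq {G D} val {X Y} f.

Lemma fP_act (G : group) (D : Type) (val : D -> G) (X Y : gset G) (f : gmap X Y) t a :
  fP val f (act t a) = act t (fP val f a).
Proof. case: a => [x|[s q]] /=; by rewrite ?gequiv ?actM. Qed.

Lemma Rm_fP (G : group) (D : Type) (val : D -> G) (X Y : gset G) (f : gmap X Y) a b :
  Rm val f a b -> fP val f a = fP val f b.
Proof.
move=> h; apply: (h (fun a b => fP val f a = fP val f b)); split; [split|split].
- by [].
- by move=> ? ? ->.
- by move=> ? ? ? -> ->.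
- by move=> t ? ? e; rewrite !fP_act e.
- case=> w [y hy] /=; by rewrite actM act1 hy.
- by [].
Qed.

Definition iZ (G : group) (D : Type) (val : D -> G) (X Y : gset G) (f : gmap X Y) :
  gmap X (Zq val f).
Proof.
refine (@GMap G X (Zq val f) (fun x => qpi (Rm val f) (inl x : PP val X Y)) _).
move=> g x; rewrite /Zq qactE //.
Defined.
Arguments iZ {G D} val {X Y} f.

Definition qZ (G : group) (D : Type) (val : D -> G) (X Y : gset G) (f : gmap X Y) :
  gmap (Zq val f) Y.
Proof.
refine (@GMap G (Zq val f) Y (qlift (fP val f)) _).
move=> g c; have [a <-] := qpi_surj c.
rewrite /Zq qactE !(qliftE (Rm_eqc val f) (@Rm_fP _ _ val _ _ f)) fP_act //.
Defined.
Arguments qZ {G D} val {X Y} f.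

Lemma factor_ok (G : group) (D : Type) (val : D -> G) (X Y : gset G) (f : gmap X Y) x :
  qZ val f (iZ val f x) = f x.
Proof. by rewrite /= (qliftE (Rm_eqc val f) (@Rm_fP _ _ val _ _ f)). Qed.

Lemma qZ_W (G : group) (D : Type) (val : D -> G) (X Y : gset G) (f : gmap X Y) :
  Wc val (qZ val f).
Proof.
split.
- move=> w y hy.
  exists (qpi (Rm val f) (cell val X (existT _ w (exist _ y hy)))); split.
    by rewrite /= (qliftE (Rm_eqc val f) (@Rm_fP _ _ val _ _ f)) /= act1.
  rewrite /Zq qactE; apply/(qpi_eq (Rm_eqc val f)).
  exact: (proj1 (proj2 (good_Rm val f)) (existT _ w (exist _ y hy))).
- move=> w z1 z2.
  have [a1 <-] := qpi_surj z1; have [a2 <-] := qpi_surj z2.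
move=> e h1 h2.
  have qE := qliftE (Rm_eqc val f) (@Rm_fP _ _ val _ _ f).
  have e' : fP val f a1 = fP val f a2 by move: e; rewrite /= !qE.
  move: h1 h2; rewrite /Zq !qactE => h1 h2.
  apply/(qpi_eq (Rm_eqc val f)).
  apply: (proj2 (proj2 (good_Rm val f)) w a1 a2 e').
  - by apply/(qpi_eq (Rm_eqc val f)).
  - by apply/(qpi_eq (Rm_eqc val f)).
Qed.

Lemma iZ_cof (G : group) (D : Type) (val : D -> G) (X Y : gset G) (f : gmap X Y)
  (E B : gset G) (p : gmap E B) : Wc val p -> llp (iZ val f) p.
Proof.
move=> [pex pun] u v hsq.
have hRe := Rm_eqc val f.
have bfix : forall q : Qt val Y,
    act (val (projT1 q)) (v (qpi (Rm val f) (cell val X q))) = v (qpi (Rm val f) (cell val X q)).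
  move=> q; rewrite -gequiv /Zq qactE; congr (v _); apply/(qpi_eq hRe).
  exact: (proj1 (proj2 (good_Rm val f)) q).
have ex : forall q : Qt val Y, {e : E | p e = v (qpi (Rm val f) (cell val X q)) /\
                                    act (val (projT1 q)) e = e}.
  move=> q; apply: constructive_indefinite_description; exact: pex (bfix q).
pose h0 (a : PP val X Y) : E :=
  match a with inl x => u x | inr sq => act sq.1 (sval (ex sq.2)) end.
have h0act : forall t a, h0 (act t a) = act t (h0 a).
  by move=> t [x|[s q]] /=; rewrite ?gequiv ?actM.
have ph0 : forall a, p (h0 a) = v (qpi (Rm val f) a).
  case=> [x|[s q]]; first exact: hsq.
  rewrite /= gequiv; case: (ex q) => e [pe _] /=.
  by rewrite pe -gequiv /Zq qactE /cell /= gmul1r.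
have hR : forall a b, Rm val f a b -> h0 a = h0 b.
  move=> a b H; suff: Rm val f a b /\ h0 a = h0 b by case.
  apply: (H (fun a b => Rm val f a b /\ h0 a = h0 b)).
  split; [split|split].
  - by move=> c; split; [apply: (eqc_refl hRe)|].
  - by move=> c d [r e]; split; [apply: (eqc_sym hRe)|].
  - by move=> c d k [r e] [r' e']; split; [apply: (eqc_trans hRe r r')|rewrite e].
  - by move=> t c d [r e]; split; [apply: (eqc_act hRe)|rewrite !h0act e].
  - move=> q; split; first exact: (proj1 (proj2 (good_Rm val f)) q).
    rewrite h0act /= act1; exact: (proj2 (proj2_sig (ex q))).
  - move=> w a1 a2 e [r1 e1] [r2 e2].
    have r12 := proj2 (proj2 (good_Rm val f)) w a1 a2 e r1 r2.
    split=> //; apply: (pun w).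
    + by rewrite !ph0; congr (v _); apply/(qpi_eq hRe).
    + by rewrite -h0act.
    + by rewrite -h0act.
have hg : forall g (c : Zq val f), qlift h0 (act g c) = act g (qlift h0 c).
  move=> g c; have [a <-] := qpi_surj c.
  by rewrite /Zq qactE !(qliftE hRe hR) h0act.
exists (@GMap G (Zq val f) E (qlift h0) hg); split.
- by move=> x; rewrite /= (qliftE hRe hR).
- move=> c; have [a <-] := qpi_surj c.
  by rewrite /= (qliftE hRe hR) ph0.
Qed.

Definition gid (G : group) (X : gset G) : gmap X X := @GMap G X X id (fun _ _ => erefl).

Lemma iso_llp (G : group) (X Y : gset G) (i : gmap X Y) (r : gmap Y X) :
  (forall a, r (i a) = a) -> (forall b, i (r b) = b) ->
  forall (E B : gset G) (p : gmap E B), llp i p.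
Proof.
move=> ri ir E B p u v sq; exists (gcomp u r); split => /=.
- by move=> a; rewrite ri.
- by move=> b; rewrite sq ir.
Qed.

Lemma iso_Wc (G : group) (D : Type) (val : D -> G) (X Y : gset G) (i : gmap X Y) (r : gmap Y X) :
  (forall a, r (i a) = a) -> (forall b, i (r b) = b) -> Wc val i.
Proof.
move=> ri ir; split.
- move=> w y hy; exists (r y); split=> //; by rewrite -gequiv hy.
- by move=> w x1 x2 e _ _; rewrite -(ri x1) e ri.
Qed.

Theorem corollary6p5 (G : group) (A : G -> Prop) (hA : generates A) :
  exists Fib Cof W : mclass G,
    closed_model_structure Fib Cof W /\
    (forall (X Y : gset G) (f : gmap X Y), Fib X Y f) /\
    (forall (X Y : gset G) (f : gmap X Y),
       W X Y f <-> gph_counting_we (cayley_map A f)).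
Proof.
pose W : mclass G := fun X Y f => gph_counting_we (cayley_map A f).
pose Cof : mclass G := fun X Y i => forall (E B : gset G) (p : gmap E B), W E B p -> llp i p.
pose Fib : mclass G := fun _ _ _ => True.
have WE : forall X Y (f : gmap X Y), W X Y f <-> Wc (@wval G A) f by move=> *; exact: W_Wc.
have cofZ : forall X Y (f : gmap X Y), Cof _ _ (iZ (@wval G A) f).
  by move=> X Y f E B p /WE Wp; apply: iZ_cof.
have cofW_iso : forall X Y (i : gmap X Y), Cof X Y i -> W X Y i ->
    exists r : gmap Y X, (forall a, r (i a) = a) /\ (forall b, i (r b) = b).
  move=> X Y i Ci Wi; have [r [h1 h2]] := Ci _ _ i Wi (gid X) (gid Y) (fun _ => erefl).
  by exists r.
exists Fib, Cof, W; split; last by split.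
split; [|split].
-
  move=> X Y Z f g; rewrite !WE; split; [|split].
  + move=> [fe fu] [ge gu]; split.
    * move=> w z hz; have [y [gy hy]] := ge w z hz; have [x [fx hx]] := fe w y hy.
      by exists x; rewrite /= fx.
    * move=> w x1 x2 /= e h1 h2; apply: (fu w _ _ _ h1 h2).
      apply: (gu w _ _ e); by rewrite -gequiv ?h1 ?h2.
  + move=> [fe fu] [ce cu]; split.
    * move=> w z hz; have [x [gx hx]] := ce w z hz.
      by exists (f x); split=> //; rewrite -gequiv hx.
    * move=> w y1 y2 e h1 h2.
      have [x1 [e1 k1]] := fe w y1 h1; have [x2 [e2 k2]] := fe w y2 h2.
      subst; congr (f _); apply: (cu w) => //=.
  + move=> [ge gu] [ce cu]; split.
    * move=> w y hy.
      have hz : act (@wval G A w) (g y) = g y by rewrite -gequiv hy.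
      have [x [gx hx]] := ce w _ hz.
      exists x; split=> //; apply: (gu w) => //; by rewrite -gequiv hx.
    * move=> w x1 x2 e h1 h2; apply: (cu w) => //=; by rewrite e.
-
  split; [|split].
  + move=> X Y f; exists (Zq (@wval G A) f), (iZ (@wval G A) f), (qZ (@wval G A) f).
    split; first exact: cofZ.
    split; last exact: factor_ok.
    by split=> //; apply/WE; apply: qZ_W.
  + move=> X Y i; split.
    * by move=> Ci E B p [_ Wp]; apply: Ci.
    * by move=> H E B p Wp; apply: H.
  + move=> X Y p; split.
    * by move=> [_ Wp] E B i Ci; apply: Ci.
    * move=> H; split=> //; apply/WE.
      have [h [h1 h2]] := H _ _ _ (cofZ _ _ p) (gid X) (qZ (@wval G A) p)
                            (fun a => esym (factor_ok (@wval G A) p a)).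
      have [qe qu] := qZ_W (@wval G A) p.
      split.
      -- move=> w y hy; have [z [qz hz]] := qe w y hy.
         exists (h z); split; first by rewrite h2.
         by rewrite -gequiv hz.
      -- move=> w x1 x2 e k1 k2.
         have h1' : forall a, h (iZ (@wval G A) p a) = a := h1.
         rewrite -(h1' x1) -(h1' x2); congr (h _).
         apply: (qu w); rewrite ?factor_ok //; by rewrite -gequiv ?k1 ?k2.
-
  split; [|split].
  + move=> X Y f; exists X, (gid X), f; split; last by split.
    split.
    * move=> E B p _ u v sq; exists u; split=> //; by move=> b; rewrite sq.
    * by apply/WE; apply: (@iso_Wc _ _ _ _ _ _ (gid X)).
  + move=> X Y i; split.
    * move=> [Ci Wi] E B p _; have [r [h1 h2]] := cofW_iso _ _ i Ci Wi.
      exact: iso_llp h1 h2 E B p.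
    * move=> H.
      have [r [h1 h2]] := H _ _ i I (gid X) (gid Y) (fun _ => erefl).
      split.
      -- move=> E B p _; exact: iso_llp h1 h2 E B p.
      -- by apply/WE; apply: iso_Wc h1 h2.
  + move=> X Y p; split=> // _ E B i [Ci Wi].
    have [r [h1 h2]] := cofW_iso _ _ i Ci Wi.
    exact: iso_llp h1 h2 X Y p.
Qed.
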